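(* Let $R \in \mathfrak{D}$ and $\mathfrak{D}' \subseteq \mathfrak{D}$, and suppose that one of the following holds: (i) $\mathfrak{D}' = \mathfrak{D}$; (ii) $R \in \mathfrak{T}_a$ and $\mathfrak{T}_a \subseteq \mathfrak{D}' \subseteq \mathfrak{D}$; (iii) $\mathfrak{D}' = \mathfrak{P}$ or $\mathfrak{D}' = \mathfrak{P}^*$, and $R \in \mathfrak{D}'$. Then for every $S \in \mathfrak{D}$ the following are equivalent: (a) $R \sqsubseteq_\Gamma S$ with respect to $\mathfrak{D}'$; (b) $\# \mathcal{S}(G,R) \leq \# \mathcal{S}(G,S)$ for all $G \in \mathfrak{D}'$. Moreover, (b) implies $\# \mathcal{H}(G,R) \leq \# \mathcal{H}(G,S)$ for all $G \in \mathfrak{D}'$.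
   Context: **Digraphs and homomorphisms.** - A digraph $G$ is a pair $(V(G),A(G))$, where $V(G)$ is a finite non-empty set and $A(G) \subseteq V(G)\times V(G)$. Arcs are written $vw$. - An arc $vv$ is a loop. An arc $vw$ with $v\neq w$ is proper. $G^*$ denotes $G$ with all loops removed. - A homomorphism $\xi: G\to H$ is a map $V(G)\to V(H)$ such that $\xi(v)\xi(w)\in A(H)$ for all $vw\in A(G)$. $\mathcal{H}(G,H)$ is the set of homomorphisms. - A homomorphism is strict if it maps every proper arc of $G$ to a proper arc of $H$. $\mathcal{S}(G,H)$ is the set of strict homomorphisms from $G$ to $H$. - A walk in $G$ is a sequence $v_0,\dots,v_I$ with $I\geq 1$ and $v_{i-1}v_i\in A(G)$ for all $i$. It is closed if $v_0=v_I$, and trivial if all $v_i$ are equal. **Classes of digraphs.** - $\mathfrak{D}$ is the class of all digraphs. - $\mathfrak{P}$ is the class of finite posets, i.e. reflexive, antisymmetric, transitive digraphs. - $\mathfrak{P}^* = \{P^* : P\in\mathfrak{P}\}$. - $\mathfrak{T}_a = \{G\in\mathfrak{D} : G^* \text{ contains no closed walk}\}$. Equivalently, every closed walk in $G$ is trivial. **Connectivity.** - Two vertices $u,w$ are adjacent if $uw\in A(G)$ or $wu\in A(G)$. - For $X\subseteq V(G)$ and $v,w\in X$, the vertices $v$ and $w$ are connected in $X$ if $v=w$, or if there are $z_0=v,z_1,\dots,z_I=w$ in $X$ with $z_{i-1},z_i$ adjacent for all $i$. - $\gamma_X(v)$ is the set of $w\in X$ connected to $v$ in $X$. - For any map $\xi$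 from $V(G)$ to a set, $\Gamma_\xi(v) := \gamma_{\xi^{-1}(\xi(v))}(v)$. **Schemes.** - For a class $\mathfrak{D}'\subseteq\mathfrak{D}$, let $\mathfrak{D}'_r$ be a fixed system of representatives of $\mathfrak{D}'$ up to isomorphism. - For $R,S\in\mathfrak{D}$, a Hom-scheme from $R$ to $S$ with respect to $\mathfrak{D}'$ is a family $\rho=(\rho_G)_{G\in\mathfrak{D}'_r}$ of maps $\rho_G:\mathcal{H}(G,R)\to\mathcal{H}(G,S)$. - It is strong if every $\rho_G$ is injective. - It is a $\Gamma$-scheme if $\Gamma_{\rho_G(\xi)}(v)=\Gamma_\xi(v)$ for all $G\in\mathfrak{D}'_r$, $\xi\in\mathcal{H}(G,R)$ and $v\in V(G)$. - $R\sqsubseteq_\Gamma S$ with respect to $\mathfrak{D}'$ means that a strong $\Gamma$-scheme from $R$ to $S$ with respect to $\mathfrak{D}'$ exists. *)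

(* Defs.v *)
From mathcomp Require Import all_boot.
Set Implicit Arguments. Unset Strict Implicit. Unset Printing Implicit Defensive.

Record digraph := Digraph { dV : finType; dA : rel dV; dV_nonempty : 0 < #|dV| }.
Arguments dA : clear implicits.
Arguments dV_nonempty : clear implicits.

Definition unloop (G : digraph) : digraph :=
  @Digraph (dV G) (fun v w => (v != w) && dA G v w) (dV_nonempty G).

Definition is_hom (G H : digraph) (f : {ffun dV G -> dV H}) : bool :=
  [forall v, forall w, dA G v w ==> dA H (f v) (f w)].

Definition is_strict (G H : digraph) (f : {ffun dV G -> dV H}) : bool :=
  is_hom f && [forall v, forall w, (dA G v w && (v != w)) ==> (f v != f w)].

Definition Hom (G H : digraph) := {f : {ffun dV G -> dV H} | is_hom f}.
Definition homset (G H : digraph) := [set f : {ffun dV G -> dV H} | is_hom f].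
Definition strictset (G H : digraph) := [set f : {ffun dV G -> dV H} | is_strict f].

Definition iso (G H : digraph) : Prop :=
  exists f : dV G -> dV H, bijective f /\ forall v w, dA G v w = dA H (f v) (f w).

Definition iso_closed (C : digraph -> Prop) : Prop :=
  forall G H, iso G H -> C G -> C H.

Definition is_poset (G : digraph) : Prop :=
  reflexive (dA G) /\ antisymmetric (dA G) /\ transitive (dA G).

Definition is_poset_star (G : digraph) : Prop :=
  exists2 P, is_poset P & iso G (unloop P).

(* a closed walk v0, v1, ..., vI (I >= 1) in G is given by v0 and s = [v1;...;vI] *)
Definition closed_walk (G : digraph) (v0 : dV G) (s : seq (dV G)) : bool :=
  (s != [::]) && path (dA G) v0 s && (last v0 s == v0).

Definition in_Ta (G : digraph) : Prop :=
  forall v0 s, ~~ @closed_walk (unloop G) v0 s.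

Definition adjacent (G : digraph) (u w : dV G) : bool := dA G u w || dA G w u.

Definition gamma (G : digraph) (X : {set dV G}) (v : dV G) : {set dV G} :=
  [set w in X | connect (fun x y => [&& x \in X, y \in X & adjacent x y]) v w].

Definition Gam (G : digraph) (T : finType) (xi : {ffun dV G -> T}) (v : dV G)
  : {set dV G} := gamma [set u | xi u == xi v] v.

(* strong Gamma-scheme from R to S w.r.t. the class C, indexed by all members
   of C (C being isomorphism closed) *)
Definition strong_Gamma_scheme (C : digraph -> Prop) (R S : digraph)
  (rho : forall G : digraph, C G -> Hom G R -> Hom G S) : Prop :=
  forall G (hG : C G),
    injective (rho G hG) /\
    forall (xi : Hom G R) (v : dV G), Gam (val (rho G hG xi)) v = Gam (val xi) v.

Definition Gamma_le (C : digraph -> Prop) (R S : digraph) : Prop :=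
  exists rho, @strong_Gamma_scheme C R S rho.

(* Main.v *)
Require Import Defs.
From mathcomp Require Import all_boot.
From Stdlib Require Import IndefiniteDescription.
Set Implicit Arguments. Unset Strict Implicit. Unset Printing Implicit Defensive.


Definition eX (G : digraph) (X : {set dV G}) := fun x y : dV G => [&& x \in X, y \in X & adjacent x y].

Lemma gammaE G X v : @gamma G X v = [set w in X | connect (eX X) v w].
Proof. by []. Qed.

Lemma conn_inv (T : finType) (e : rel T) (P : T -> Prop) v w :
  (forall x y, e x y -> P x -> P y) -> P v -> connect e v w -> P w.
Proof.
move=> H Pv /connectP [s pth ->]; elim: s v pth Pv => //= y s IH v /andP[exy pth] Pv.
exact: IH pth (H _ _ exy Pv).
Qed.

Lemma adj_sym G : symmetric (@adjacent G).
Proof. by move=> x y; rewrite /adjacent orbC. Qed.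

Lemma eX_sym G X : symmetric (@eX G X).
Proof. by move=> x y; rewrite /eX adj_sym; case: (x \in X); case: (y \in X). Qed.

Lemma gamma_self (G : digraph) (X : {set dV G}) (v : dV G) : v \in X -> v \in @gamma G X v.
Proof. by move=> vX; rewrite gammaE inE vX connect0. Qed.

Lemma gamma_sub (G : digraph) (X : {set dV G}) (v : dV G) : @gamma G X v \subset X.
Proof. by apply/subsetP => w; rewrite gammaE inE => /andP[]. Qed.

Lemma gamma_mem (G : digraph) (X : {set dV G}) (v w : dV G) : w \in @gamma G X v -> w \in X.
Proof. by move/(subsetP (gamma_sub X v)). Qed.

Lemma gamma_eq (G : digraph) (X : {set dV G}) (v w : dV G) : w \in @gamma G X v -> gamma X w = gamma X v.
Proof.
rewrite gammaE inE => /andP[wX c]; apply/setP => u; rewrite !gammaE !inE.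
case: (u \in X) => //=; apply/idP/idP => [cu | cu].
  exact: connect_trans c cu.
rewrite (sym_connect_sym (@eX_sym G X)) in c; exact: connect_trans c cu.
Qed.

Lemma gamma_adj (G : digraph) (X : {set dV G}) (v w : dV G) : v \in X -> w \in X -> adjacent v w -> w \in @gamma G X v.
Proof. by move=> vX wX a; rewrite gammaE inE wX connect1 // /eX vX wX. Qed.

Lemma gamma_mono (G : digraph) (X Y : {set dV G}) (v : dV G) : X \subset Y -> @gamma G X v \subset gamma Y v.
Proof.
move=> sXY; apply/subsetP => w; rewrite !gammaE !inE => /andP[wX c].
rewrite (subsetP sXY _ wX) /=.
apply: (conn_inv (P := fun x => connect (eX Y) v x)) c => //.
move=> x y /and3P[xX yX a] cx; apply: connect_trans cx (connect1 _).
by rewrite /eX (subsetP sXY _ xX) (subsetP sXY _ yX).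
Qed.

Lemma gamma_gamma (G : digraph) (X : {set dV G}) (v : dV G) : @gamma G X v \subset gamma (gamma X v) v.
Proof.
apply/subsetP => w wg; have := wg; rewrite gammaE inE => /andP[wX c].
have : connect (eX X) v w && connect (eX (gamma X v)) v w.
  apply: (conn_inv (P := fun x => connect (eX X) v x && connect (eX (gamma X v)) v x)) c; last by rewrite !connect0.
  move=> x y exy /andP[cx cx']; have cy := connect_trans cx (connect1 exy).
  rewrite cy /=; apply: connect_trans cx' (connect1 _).
  move: exy => /and3P[xX yX a].
  by rewrite /eX a !gammaE !inE xX yX cx cy.
case/andP=> _ c'; by rewrite gammaE inE c' wg.
Qed.

Definition typ (G : digraph) (T : finType) (xi : {ffun dV G -> T}) : {ffun dV G -> {set dV G}} :=
  [ffun v => Gam xi v].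

Lemma Gam_self (G : digraph) (T : finType) (xi : {ffun dV G -> T}) v : v \in Gam xi v.
Proof. by apply: gamma_self; rewrite inE. Qed.

Lemma Gam_val (G : digraph) (T : finType) (xi : {ffun dV G -> T}) v w :
  w \in Gam xi v -> xi w = xi v.
Proof. by move/gamma_mem; rewrite inE => /eqP. Qed.

Lemma Gam_eq (G : digraph) (T : finType) (xi : {ffun dV G -> T}) v w :
  w \in Gam xi v -> Gam xi w = Gam xi v.
Proof.
move=> h; have E := Gam_val h; rewrite /Gam E; exact: gamma_eq.
Qed.

Lemma Gam_adj (G : digraph) (T : finType) (xi : {ffun dV G -> T}) v w :
  adjacent v w -> xi v = xi w -> w \in Gam xi v.
Proof. by move=> a E; apply: gamma_adj => //; rewrite inE // E. Qed.

Lemma GamEq (G : digraph) (T1 T2 : finType) (x1 : {ffun dV G -> T1}) (x2 : {ffun dV G -> T2}) :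
  (forall v w, w \in Gam x1 v -> x2 w = x2 v) ->
  (forall x y, adjacent x y -> x2 x = x2 y -> Gam x1 x = Gam x1 y) ->
  forall v, Gam x2 v = Gam x1 v.
Proof.
move=> HA HB v; apply/eqP; rewrite eqEsubset; apply/andP; split.
  apply/subsetP => w; rewrite /Gam gammaE inE => /andP[_ c].
  have : Gam x1 w = Gam x1 v.
    apply: (conn_inv (P := fun x => Gam x1 x = Gam x1 v)) c => //.
    move=> x y /and3P[xX yX a] Ex; rewrite -Ex; symmetry; apply: HB a _.
    by move: xX yX; rewrite !inE => /eqP -> /eqP ->.
  by move=> E; have := Gam_self x1 w; rewrite E.
apply: subset_trans (gamma_gamma _ _) _.
apply: gamma_mono; apply/subsetP => u /HA E; by rewrite inE E.
Qed.

Lemma strict_Gam (G R R' : digraph) (xi : {ffun dV G -> dV R}) (xi' : {ffun dV G -> dV R'}) :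
  is_hom xi' -> (forall v, Gam xi' v = Gam xi v) -> is_strict xi -> is_strict xi'.
Proof.
move=> h E /andP[_ /forallP s]; apply/andP; split => //.
apply/forallP=> v; apply/forallP => w; apply/implyP => /andP[a ne].
apply/negP => /eqP E'.
have : w \in Gam xi v by rewrite -E; apply: Gam_adj => //; rewrite /adjacent a.
move/Gam_val => E2.
by move: (s v) => /forallP /(_ w) /implyP /(_ (introT andP (conj a ne))); rewrite E2 eqxx.
Qed.

Lemma inj_fibers (A B K : finType) (tA : A -> K) (tB : B -> K) :
  (forall k, #|[set a | tA a == k]| <= #|[set b | tB b == k]|) ->
  exists f : A -> B, injective f /\ forall a, tB (f a) = tA a.
Proof.
move=> H; case: (pickP (fun _ : B => true)) => [b0 _|B0].
  pose f a := nth b0 (enum [set b | tB b == tA a]) (index a (enum [set a' | tA a' == tA a])).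
  have Hlt a : index a (enum [set a' | tA a' == tA a]) < size (enum [set b | tB b == tA a]).
    rewrite -cardE; apply: leq_trans (H (tA a)); by rewrite cardE index_mem mem_enum inE.
  have Hin a : f a \in [set b | tB b == tA a] by rewrite -mem_enum; apply: mem_nth.
  have Ht a : tB (f a) = tA a by have := Hin a; rewrite inE => /eqP.
  exists f; split => // a a' Heq.
  have Et : tA a = tA a' by rewrite -Ht Heq Ht.
  move: Heq; rewrite /f Et => /eqP; rewrite nth_uniq ?enum_uniq //; last by rewrite -Et.
  move/eqP => Hi.
  have ma : a \in enum [set a'' | tA a'' == tA a'] by rewrite mem_enum inE Et.
  have ma' : a' \in enum [set a'' | tA a'' == tA a'] by rewrite mem_enum inE.
  by rewrite -(nth_index a ma) Hi nth_index.
have Hf : A -> False.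
  move=> a; have := H (tA a).
  have -> : #|[set b | tB b == tA a]| = 0.
    by apply/eqP; rewrite cards_eq0; apply/eqP/setP => b; by have := B0 b.
  by rewrite leqn0 cards_eq0 => /eqP/setP/(_ a); rewrite !inE eqxx.
exists (fun a => False_rect _ (Hf a)); split; first by move=> a; case: (Hf a).
by move=> a; case: (Hf a).
Qed.

Lemma exists_rho (C : digraph -> Prop) (R S : digraph) :
  (forall G, C G -> exists f : Hom G R -> Hom G S,
      injective f /\ forall xi v, Gam (val (f xi)) v = Gam (val xi) v) ->
  Gamma_le C R S.
Proof.
move=> H.
exists (fun G hG => proj1_sig (constructive_indefinite_description _ (H G hG))).
move=> G hG; exact: (proj2_sig (constructive_indefinite_description _ (H G hG))).
Qed.

Lemma card_Hom_pred (G H : digraph) (P : pred {ffun dV G -> dV H}) :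
  #|[set a : Hom G H | P (val a)]| = #|[set xi | is_hom xi && P xi]|.
Proof.
rewrite -(card_imset _ val_inj); apply: eq_card => xi; rewrite [in RHS]inE.
apply/imsetP/andP => [[a]|[h e]].
  by rewrite inE => e ->; rewrite (valP a).
by exists (exist _ xi h) => //; rewrite inE.
Qed.

Lemma typE (G : digraph) (T1 T2 : finType) (x1 : {ffun dV G -> T1}) (x2 : {ffun dV G -> T2}) :
  typ x1 = typ x2 -> forall v, Gam x1 v = Gam x2 v.
Proof. by move=> E v; have := congr1 (fun f : {ffun dV G -> {set dV G}} => f v) E; rewrite !ffunE. Qed.

Lemma strict_hom (G H : digraph) (f : {ffun dV G -> dV H}) v w :
  is_strict f -> dA G v w -> dA H (f v) (f w).
Proof. by case/andP => /forallP /(_ v) /forallP /(_ w) /implyP. Qed.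

Lemma strict_ne (G H : digraph) (f : {ffun dV G -> dV H}) v w :
  is_strict f -> dA G v w -> v != w -> f v != f w.
Proof.
case/andP => _ /forallP /(_ v) /forallP /(_ w) /implyP h a ne; apply: h.
by rewrite a ne.
Qed.

Lemma hom_arc (G H : digraph) (f : {ffun dV G -> dV H}) v w :
  is_hom f -> dA G v w -> dA H (f v) (f w).
Proof. by move=> /forallP /(_ v) /forallP /(_ w) /implyP. Qed.

Lemma gfact (G R Q : digraph) (xi0 xi : {ffun dV G -> dV R}) (pi : dV G -> dV Q)
  (sg : dV Q -> dV G) :
  (forall q, pi (sg q) = q) ->
  (forall v w, (pi v == pi w) = (Gam xi0 v == Gam xi0 w)) ->
  typ xi = typ xi0 -> forall v, xi (sg (pi v)) = xi v.
Proof.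
move=> Hs Hp t v.
have E : Gam xi0 (sg (pi v)) = Gam xi0 v by apply/eqP; rewrite -Hp Hs.
apply: Gam_val; rewrite (typE t) -E -(typE t); exact: Gam_self.
Qed.

Lemma key (G R S Q : digraph) (xi0 : {ffun dV G -> dV R}) (pi : dV G -> dV Q)
  (sg : dV Q -> dV G) :
  (forall q, pi (sg q) = q) ->
  (forall v w, (pi v == pi w) = (Gam xi0 v == Gam xi0 w)) ->
  (forall v w, dA G v w -> dA Q (pi v) (pi w)) ->
  (forall xi : {ffun dV G -> dV R}, is_hom xi -> typ xi = typ xi0 ->
     is_strict ([ffun q => xi (sg q)] : {ffun dV Q -> dV R})) ->
  #|strictset Q R| <= #|strictset Q S| ->
  #|[set xi : {ffun dV G -> dV R} | is_hom xi && (typ xi == typ xi0)]|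
  <= #|[set eta : {ffun dV G -> dV S} | is_hom eta && (typ eta == typ xi0)]|.
Proof.
move=> Hs Hp Ha Hst Hb.
pose g := fun xi : {ffun dV G -> dV R} => ([ffun q => xi (sg q)] : {ffun dV Q -> dV R}).
pose h := fun f : {ffun dV Q -> dV S} => ([ffun v => f (pi v)] : {ffun dV G -> dV S}).
apply: (@leq_trans #|strictset Q R|).
  rewrite -(@card_in_imset _ _ g).
    apply: subset_leq_card; apply/subsetP => f /imsetP[xi]; rewrite inE => /andP[hx /eqP tx] ->.
    by rewrite inE; apply: Hst.
  move=> xi xi'; rewrite !inE => /andP[_ /eqP t] /andP[_ /eqP t'] E.
  apply/ffunP => v; move/ffunP: E => /(_ (pi v)).
  by rewrite /g !ffunE (gfact Hs Hp t) (gfact Hs Hp t').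
apply: leq_trans Hb _.
have inj_h : injective h.
  move=> f f' E; apply/ffunP => q; move/ffunP: E => /(_ (sg q)).
  by rewrite /h !ffunE Hs.
rewrite -(card_imset (strictset Q S) inj_h).
apply: subset_leq_card; apply/subsetP => e /imsetP[f sf ->]; have {}sf : is_strict f by move: sf; rewrite inE.
rewrite inE; apply/andP; split.
  apply/forallP => v; apply/forallP => w; apply/implyP => a; rewrite /h !ffunE.
  by apply: strict_hom sf _; apply: Ha.
apply/eqP/ffunP => v; rewrite !ffunE; apply: GamEq.
  move=> v' w /Gam_eq E; rewrite /h !ffunE; congr (f _); apply/eqP; by rewrite Hp E.
move=> x y a; rewrite /h !ffunE => E.
case Exy: (pi x == pi y); first by apply/eqP; rewrite -Hp.
exfalso.
have nxy : x != y by apply: contraFneq Exy => ->.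
move: a; rewrite /adjacent => /orP [a|a].
  have := strict_ne sf (Ha _ _ a) (negbT Exy); by rewrite E eqxx.
have := strict_ne sf (Ha _ _ a); rewrite eq_sym Exy E eqxx; by move/(_ isT).
Qed.

Definition QV (G : digraph) (k : dV G -> {set dV G}) : finType :=
  {B : {set dV G} | B \in [set k v | v in [set: dV G]]}.

Definition qpi (G : digraph) (k : dV G -> {set dV G}) (v : dV G) : QV k :=
  exist _ (k v) (imset_f k (in_setT v)).

Lemma QV_ne (G : digraph) (k : dV G -> {set dV G}) : 0 < #|QV k|.
Proof.
case/card_gt0P: (dV_nonempty G) => v _; apply/card_gt0P; by exists (qpi k v).
Qed.

Definition qA (G : digraph) (k : dV G -> {set dV G}) : rel (QV k) :=
  fun q q' => [exists v, exists w, [&& qpi k v == q, qpi k w == q' & dA G v w]].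

Definition Qbase (G : digraph) (k : dV G -> {set dV G}) : digraph := Digraph (@qA G k) (QV_ne k).
Definition Qclos (G : digraph) (k : dV G -> {set dV G}) : digraph :=
  Digraph (connect (@qA G k)) (QV_ne k).

Lemma qex (G : digraph) (k : dV G -> {set dV G}) (q : QV k) : exists v, qpi k v == q.
Proof.
case: q => B hB; have := hB; case/imsetP => v _ E; exists v; apply/eqP; apply: val_inj; by rewrite /= E.
Qed.

Definition qsg (G : digraph) (k : dV G -> {set dV G}) (q : QV k) : dV G := xchoose (qex q).

Lemma qpi_sg (G : digraph) (k : dV G -> {set dV G}) (q : QV k) : qpi k (qsg q) = q.
Proof. apply/eqP; exact: (xchooseP (qex q)). Qed.

Lemma qpi_eq (G : digraph) (k : dV G -> {set dV G}) v w : (qpi k v == qpi k w) = (k v == k w).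
Proof. by rewrite -val_eqE. Qed.

Lemma qA_arc (G : digraph) (k : dV G -> {set dV G}) v w : dA G v w -> qA (qpi k v) (qpi k w).
Proof. by move=> a; apply/existsP; exists v; apply/existsP; exists w; rewrite !eqxx a. Qed.

Lemma base_strict (G R : digraph) (xi0 xi : {ffun dV G -> dV R}) :
  is_hom xi -> typ xi = typ xi0 ->
  is_strict ([ffun q => xi (qsg q)] : {ffun dV (Qbase (fun v => Gam xi0 v)) -> dV R}).
Proof.
move=> hx t.
pose k := fun v => Gam xi0 v.
have gf := @gfact G R (Qbase k) xi0 xi (qpi k) (@qsg G k) (@qpi_sg G k) (@qpi_eq G k) t.
apply/andP; split.
  apply/forallP => q; apply/forallP => q'; apply/implyP.
  case/existsP => v /existsP [w /and3P[/eqP <- /eqP <- a]].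
  by rewrite !ffunE !gf; apply: hom_arc hx a.
apply/forallP => q; apply/forallP => q'; apply/implyP => /andP[].
case/existsP => v /existsP [w /and3P[/eqP <- /eqP <- a]] ne.
rewrite !ffunE !gf; apply/negP => /eqP E.
have : w \in Gam xi v by apply: Gam_adj => //; rewrite /adjacent a.
move/Gam_eq; rewrite !(typE t) => E'.
by move: ne; rewrite qpi_eq E' eqxx.
Qed.

Lemma clos_facts (G R : digraph) (xi0 xi : {ffun dV G -> dV R}) :
  is_poset R -> is_hom xi -> typ xi = typ xi0 ->
  let k := fun v => Gam xi0 v in
  let f := ([ffun q => xi (qsg q)] : {ffun QV k -> dV R}) in
  (forall q q', connect (@qA G k) q q' -> dA R (f q) (f q')) /\
  (forall q q', connect (@qA G k) q q' -> f q' = f q -> q' = q).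
Proof.
move=> [Rr [Ras Rtr]] hx t k f.
have bs := base_strict hx t.
have B1 q q' : qA q q' -> dA R (f q) (f q') by move=> a; exact: (@strict_hom (Qbase k) R f q q' bs a).
have B2 q q' : qA q q' -> q != q' -> f q != f q' by move=> a; exact: (@strict_ne (Qbase k) R f q q' bs a).
have C1 q q' : connect (@qA G k) q q' -> dA R (f q) (f q').
  apply: (conn_inv (P := fun x => dA R (f q) (f x))) => //.
  by move=> x y a h; apply: Rtr h (B1 _ _ a).
split => // q q' /connectP [s pth ->] {q'}.
elim: s q pth => //= q1 s IH q /andP[a pth] Ef.
have c1 : connect (@qA G k) q1 (last q1 s) by apply/connectP; exists s.
have E1 : f q1 = f q.
  apply: Ras; apply/andP; split; last exact: B1.
  rewrite -Ef; exact: C1.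
have E2 : q1 = q.
  case: (eqVneq q q1) => [->//|ne]; by move: (B2 _ _ a ne); rewrite E1 eqxx.
by rewrite IH // E1 -Ef.
Qed.

Lemma clos_strict (G R : digraph) (xi0 xi : {ffun dV G -> dV R}) :
  is_poset R -> is_hom xi -> typ xi = typ xi0 ->
  is_strict ([ffun q => xi (qsg q)] : {ffun dV (Qclos (fun v => Gam xi0 v)) -> dV R}).
Proof.
move=> pR hx t; have [F1 F2] := clos_facts pR hx t.
apply/andP; split.
  apply/forallP => q; apply/forallP => q'; apply/implyP => c; exact: F1.
apply/forallP => q; apply/forallP => q'; apply/implyP => /andP[c ne].
apply/negP => /eqP E; move: ne; by rewrite (F2 _ _ c (esym E)) eqxx.
Qed.

Lemma clos_poset (G R : digraph) (xi0 : {ffun dV G -> dV R}) :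
  is_poset R -> is_hom xi0 -> is_poset (Qclos (fun v => Gam xi0 v)).
Proof.
move=> pR h0; have [F1 F2] := clos_facts pR h0 (erefl (typ xi0)).
have Ras := proj1 (proj2 pR).
split.
  by move=> q /=; exact: connect0.
split; last by move=> y x z /=; exact: connect_trans.
move=> q q' /= /andP[c c']; symmetry; apply: F2 (c) _.
apply: Ras; apply/andP; split; [exact: F1 c' | exact: F1 c].
Qed.

Lemma Ta_strict (Q R : digraph) (f : {ffun dV Q -> dV R}) :
  is_strict f -> in_Ta R -> in_Ta Q.
Proof.
move=> sf hR v0 s; apply/negP => /andP[/andP[ne pth] /eqP l].
apply: (negP (hR (f v0) (map f s))).
rewrite /closed_walk; apply/andP; split; first (apply/andP; split).
- by case: s ne {pth l}.
- rewrite path_map; apply: sub_path pth => x y /= /andP[nxy a].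
  by rewrite (strict_ne sf a nxy) (strict_hom sf a).
- by rewrite last_map l.
Qed.

Lemma star_loopless (R : digraph) : is_poset_star R -> forall r, ~~ dA R r r.
Proof. by case=> P _ [f [_ E]] r; rewrite E /= eqxx. Qed.

Lemma hom_loopless_strict (G R : digraph) (xi : {ffun dV G -> dV R}) :
  (forall r, ~~ dA R r r) -> is_hom xi -> is_strict xi.
Proof.
move=> nl hx; apply/andP; split => //.
apply/forallP => v; apply/forallP => w; apply/implyP => /andP[a _].
apply/eqP => E; have := hom_arc hx a; by rewrite E (negbTE (nl _)).
Qed.

Lemma Gam_strict (G R : digraph) (xi : {ffun dV G -> dV R}) v :
  is_strict xi -> Gam xi v = [set v].
Proof.
move=> sx; apply/setP => w; rewrite inE; apply/idP/eqP => [|->]; last exact: Gam_self.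
rewrite /Gam gammaE inE => /andP[_ c].
apply: (conn_inv (P := fun x => x = v)) c => // x y /and3P[xX yX a] Ex.
have Exy : xi x = xi y by move: xX yX; rewrite !inE => /eqP -> /eqP ->.
case: (eqVneq x y) => [<- //|ne]; exfalso.
move: a; rewrite /adjacent => /orP[a|a].
  by move: (strict_ne sx a ne); rewrite Exy eqxx.
by move: (strict_ne sx a (negbT (introF eqP (fun e => (negP ne) (introT eqP (esym e)))))); rewrite Exy eqxx.
Qed.

Lemma card_Hom (G H : digraph) : #|[set: Hom G H]| = #|homset G H|.
Proof.
rewrite (_ : [set: Hom G H] = [set a : Hom G H | predT (val a)]); last by apply/setP => a; rewrite !inE.
rewrite card_Hom_pred; by apply: eq_card => xi; rewrite !inE andbT.
Qed.

Lemma card_strict (G H : digraph) :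
  #|strictset G H| = #|[set a : Hom G H | is_strict (val a)]|.
Proof.
rewrite card_Hom_pred; apply: eq_card => xi; rewrite !inE.
by case: (is_strict xi) / idP => [/andP[-> _]|]; rewrite ?andbF.
Qed.

Theorem theorem2 (C : digraph -> Prop) (R : digraph)
  (hC : iso_closed C)
  (hcase : (forall G, C G)
           \/ (in_Ta R /\ (forall G, in_Ta G -> C G))
           \/ (((forall G, C G <-> is_poset G) \/ (forall G, C G <-> is_poset_star G))
               /\ C R)) :
  forall S : digraph,
    (Gamma_le C R S <->
       (forall G, C G -> #|strictset G R| <= #|strictset G S|))
    /\ ((forall G, C G -> #|strictset G R| <= #|strictset G S|) ->
        forall G, C G -> #|homset G R| <= #|homset G S|).
Proof.
move=> S.
have ab : Gamma_le C R S -> forall G, C G -> #|strictset G R| <= #|strictset G S|.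
  case=> rho Hr G hG; case: (Hr G hG) => inj Hg.
  rewrite card_strict -(@card_in_imset _ _ (fun a => val (rho G hG a))); last first.
    by move=> a b _ _ /val_inj /inj.
  apply: subset_leq_card; apply/subsetP => xi /imsetP[a sa ->].
  rewrite inE; apply: strict_Gam (valP (rho G hG a)) (Hg a) _.
  by move: sa; rewrite inE.
have ba : (forall G, C G -> #|strictset G R| <= #|strictset G S|) -> Gamma_le C R S.
  move=> hb; apply: exists_rho => G hG.
  have [f [fi ft]] : exists f : Hom G R -> Hom G S,
      injective f /\ forall a, typ (val (f a)) = typ (val a).
    apply: (@inj_fibers (Hom G R) (Hom G S) _ (fun a => typ (val a)) (fun b => typ (val b))).
    move=> k; rewrite (@card_Hom_pred G R (fun xi => typ xi == k)) (@card_Hom_pred G S (fun xi => typ xi == k)).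
    case: (set_0Vmem [set xi : {ffun dV G -> dV R} | is_hom xi && (typ xi == k)]) => [-> | [xi0]].
      by rewrite cards0.
    rewrite inE => /andP[h0 /eqP <-].
    pose k' := fun v => Gam xi0 v.
    case: hcase => [hall | [[hTa hTaC] | [[hP | hP] hCR]]].
    - apply: (@key G R S (Qbase k') xi0 (qpi k') (@qsg G k') (@qpi_sg G k') (@qpi_eq G k')
               (@qA_arc G k') (fun xi h t => base_strict h t) (hb _ (hall _))).
    - apply: (@key G R S (Qbase k') xi0 (qpi k') (@qsg G k') (@qpi_sg G k') (@qpi_eq G k')
               (@qA_arc G k') (fun xi h t => base_strict h t) (hb _ _)).
      apply: hTaC; apply: (Ta_strict (base_strict h0 (erefl (typ xi0))) hTa).
    - have pR : is_poset R by apply/hP.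
      apply: (@key G R S (Qclos k') xi0 (qpi k') (@qsg G k') (@qpi_sg G k') (@qpi_eq G k')
               _ (fun xi h t => clos_strict pR h t) (hb _ _)).
        by move=> v w a; apply: connect1; apply: qA_arc.
      by apply/hP; apply: clos_poset.
    - have nl := star_loopless (proj1 (hP R) hCR).
      have s0 := hom_loopless_strict nl h0.
      apply: (@key G R S G xi0 id id (fun _ => erefl) _ (fun _ _ a => a) _ (hb _ hG)).
        move=> v w /=; rewrite !(Gam_strict _ s0).
        by apply/eqP/eqP => [->//|E]; apply/set1P; rewrite -E set11.
      move=> xi h _.
      have -> : ([ffun q => xi q] : {ffun dV G -> dV R}) = xi by apply/ffunP => q; rewrite ffunE.
      exact: hom_loopless_strict nl h.
  exists f; split => // xi v; exact: (typE (ft xi)).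
split; first by split.
move=> hb G hG; have [rho Hr] := ba hb; case: (Hr G hG) => inj _.
by rewrite -!card_Hom !cardsT; apply: leq_card inj.
Qed.
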